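(* Let $\mathcal D=(X,\mathcal A,\mu,\mu^{\otimes2},R,I,\Pi_R,G,E_0,\eta)$ be a pre-structural datum with $\eta\in[0,1)$ and $\mu(X)<\infty$, such that $\{r\}\in\mathcal A$ and $F_r:=\Pi_R^{-1}(\{r\})\in\mathcal A$ for every $r\in R$, and such that either (R-fin) $R$ is finite, or (R-ctbl) $R$ is countable, $\mathcal A$ is a $\sigma$-algebra and $\mu$ is $\sigma$-additive. Let $G|_R:=G\cap(R\times R)$ and let $\mathcal D|_R$ be the restricted datum $(R,\ \mathcal A\cap\mathcal P(R),\ \mu|_R,\ \mu^{\otimes2}|_{R\times R},\ R,\ \varnothing,\ \mathrm{id}_R,\ G|_R,\ \mu(R),\ \eta)$. Then: (i) If $\mathcal D$ satisfies Axiom I and Axiom III(b), then $\mu(X\setminus R)=0$ and, for every $B\in\mathcal A$, with $B_R:=B\cap R$, \[\mu^{\otimes2}((B\times X)\cap G)=\mu^{\otimes2}((B_R\times R)\cap G|_R).\] (ii) If $\mathcal D$ satisfies Axiom I and Axiom III(b), then the coupling law (Axiom III(c)) holds for $\mathcal D$ if and only if it holds for $\mathcal D|_R$, i.e. if and only if $\mu^{\otimes2}((B\times R)\cap G|_R)=\mu(B)+\eta\,\mu^{\otimes2}((B\times R)\cap G|_R)$ for all $B\in\mathcal A$ with $B\subseteq R$. (iii) If $\mathcal D$ satisfies Axioms I, II, III(a), III(b) and $X=R\sqcup I$, then $\mathcal D$ is an admissible structural model if and only if $\mathcal D|_R$ is an admissible structural model.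
   Context: For a nonempty set $X$, an algebra $\mathcal A\subseteq\mathcal P(X)$ contains $\varnothing,X$ and is closed under finite unions and complements. A finitely additive measure $\mu:\mathcal A\to[0,\infty)$ satisfies $\mu(\varnothing)=0$ and additivity on disjoint pairs. $\mathcal A\otimes\mathcal A$ denotes the algebra generated by rectangles $B_1\times B_2$, $B_i\in\mathcal A$. For relations $H,K\subseteq X\times X$, $H\circ K=\{(x,z):\exists y\,(x,y)\in H,(y,z)\in K\}$. A pre-structural datum is a tuple $(X,\mathcal A,\mu,\mu^{\otimes2},R,I,\Pi_R,G,E_0,\eta)$ where: $X$ nonempty; $\mathcal A$ an algebra on $X$; $\mu$ a finitely additive measure on $\mathcal A$; $\mu^{\otimes2}:\mathcal A\otimes\mathcal A\to[0,\infty)$ finitely additive with $\mu^{\otimes2}(B_1\times B_2)=\mu(B_1)\mu(B_2)$; $R,I\in\mathcal A$ disjoint; $\Pi_R:X\to R$ a map; $G\in\mathcal A\otimes\mathcal A$; $E_0\in(0,\infty)$; $\eta\in[0,1]$. Axiom I: $\Pi_R\circ\Pi_R=\Pi_R$, $\Pi_R(r)=r$ for $r\in R$, and $\Pi_R^{-1}(B)\in\mathcal A$ for every $B\in\mathcal A$ with $B\subseteq R$. Axiom II: $G$ is reflexive, symmetric, and $G\circ G=G$. Axiom III: (a) $\mu(R)+\mu(I)=E_0>0$; (b) $\mu(\Pi_R^{-1}(B))=\mu(B)$ for all $B\in\mathcal A$, $B\subseteq R$; (c) coupling law: for all $B\in\mathcal A$, $\mu^{\otimes2}((B\times X)\cap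 G)=\mu(B)+\eta\,\mu^{\otimes2}((\Pi_R^{-1}(B)\times X)\cap G)$. An admissible structural model is a pre-structural datum satisfying Axioms I, II, III. *)

(* Defs.v *)
From HB Require Import structures.
From mathcomp Require Import all_boot all_order all_algebra.
From mathcomp Require Import all_classical all_reals.
From mathcomp Require Import topology normedtype sequences.
Set Implicit Arguments. Unset Strict Implicit. Unset Printing Implicit Defensive.
Import Order.TTheory GRing.Theory Num.Theory numFieldNormedType.Exports.
Local Open Scope classical_set_scope.
Local Open Scope ring_scope.

Section Defs.
Variable R : realType.

Definition is_algebra {T : Type} (A : set (set T)) : Prop :=
  [/\ A set0, A setT,
      (forall B C, A B -> A C -> A (B `|` C)) &
      (forall B, A B -> A (~` B))].

Definition prod_alg {T : Type} (A : set (set T)) : set (set (T * T)) :=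
  fun S => forall C : set (set (T * T)), is_algebra C ->
    (forall B1 B2, A B1 -> A B2 -> C (B1 `*` B2)) -> C S.

(** Finitely additive measure A -> [0, oo) (values outside A are irrelevant). *)
Definition fin_add_measure {T : Type} (A : set (set T)) (m : set T -> R) : Prop :=
  [/\ m set0 = 0, (forall B, A B -> 0 <= m B) &
      (forall B C, A B -> A C -> B `&` C = set0 -> m (B `|` C) = m B + m C)].

Definition rel_comp {T : Type} (H K : set (T * T)) : set (T * T) :=
  fun p => exists y, H (p.1, y) /\ K (y, p.2).

Definition sigma_alg_closed {T : Type} (A : set (set T)) : Prop :=
  forall F : nat -> set T, (forall n, A (F n)) -> A (\bigcup_n F n).

Definition sigma_additive {T : Type} (A : set (set T)) (m : set T -> R) : Prop :=
  forall F : nat -> set T, (forall n, A (F n)) -> trivIset setT F ->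
    A (\bigcup_n F n) ->
    ((fun n => \sum_(k < n) m (F k)) : nat -> R) @ \oo --> (m (\bigcup_n F n) : R).

(** The tuple (X, A, mu, mu2, R, I, Pi_R, G, E0, eta); X is the carrier type,
    Pi_R is a map X -> X whose range lies in R (required in pre_structural). *)
Record datum (X : Type) := Datum {
  dA : set (set X);
  dmu : set X -> R;
  dmu2 : set (X * X) -> R;
  dR : set X;
  dI : set X;
  dPi : X -> X;
  dG : set (X * X);
  dE0 : R;
  deta : R }.

Variable X : Type.
Implicit Type D : datum X.

Definition pre_structural D : Prop :=
  [/\ [/\ (exists x : X, True), is_algebra (dA D), fin_add_measure (dA D) (dmu D) &
      fin_add_measure (prod_alg (dA D)) (dmu2 D)],
      (forall B1 B2, dA D B1 -> dA D B2 ->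
          dmu2 D (B1 `*` B2) = dmu D B1 * dmu D B2),
      [/\ dA D (dR D), dA D (dI D), dR D `&` dI D = set0 &
          (forall x, dR D (dPi D x))] &
      [/\ prod_alg (dA D) (dG D), 0 < dE0 D & 0 <= deta D <= 1]].

Definition axiomI D : Prop :=
  [/\ (forall x, dPi D (dPi D x) = dPi D x),
      (forall r, dR D r -> dPi D r = r) &
      (forall B, dA D B -> B `<=` dR D -> dA D (dPi D @^-1` B))].

Definition axiomII D : Prop :=
  [/\ (forall x, dG D (x, x)),
      (forall x y, dG D (x, y) -> dG D (y, x)) &
      rel_comp (dG D) (dG D) = dG D].

Definition axiomIIIa D : Prop := dmu D (dR D) + dmu D (dI D) = dE0 D /\ 0 < dE0 D.

Definition axiomIIIb D : Prop :=
  forall B, dA D B -> B `<=` dR D -> dmu D (dPi D @^-1` B) = dmu D B.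

Definition axiomIIIc D : Prop :=
  forall B, dA D B ->
    dmu2 D ((B `*` setT) `&` dG D) =
    dmu D B + deta D * dmu2 D ((dPi D @^-1` B `*` setT) `&` dG D).

Definition admissible D : Prop :=
  [/\ pre_structural D, axiomI D, axiomII D &
      [/\ axiomIIIa D, axiomIIIb D & axiomIIIc D]].

Definition restrict_datum D : datum {x : X | dR D x} :=
  @Datum {x : X | dR D x}
    (fun B => dA D (sval @` B))
    (fun B => dmu D (sval @` B))
    (fun S => dmu2 D ((fun p => (sval p.1, sval p.2)) @` S))
    setT
    set0
    id
    (fun p => dG D (sval p.1, sval p.2))
    (dmu D (dR D))
    (deta D).

End Defs.

(* Main.v *)
Require Import Defs.
From HB Require Import structures.
From mathcomp Require Import all_boot all_order all_algebra.
From mathcomp Require Import all_classical all_reals.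
From mathcomp Require Import topology normedtype sequences.
From mathcomp Require Import lra.
Set Implicit Arguments. Unset Strict Implicit.
Import Order.TTheory GRing.Theory Num.Theory.
Local Open Scope classical_set_scope.
Local Open Scope ring_scope.

Section Gen.
Variable (R : realType) (T : Type) (A : set (set T)).
Hypothesis hA : is_algebra A.

Lemma alg0 : A set0. Proof. by case: hA. Qed.
Lemma algT : A setT. Proof. by case: hA. Qed.
Lemma algU B C : A B -> A C -> A (B `|` C). Proof. by case: hA => _ _ h _; apply: h. Qed.
Lemma algC B : A B -> A (~` B). Proof. by case: hA => _ _ _ h; apply: h. Qed.
Lemma algI B C : A B -> A C -> A (B `&` C).
Proof. move=> hB hC; rewrite -[B `&` C]setCK setCI; apply/algC/algU; exact/algC. Qed.
Lemma algD B C : A B -> A C -> A (B `\` C).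
Proof. rewrite setDE => hB hC; apply: algI => //; exact: algC. Qed.

Variable m : set T -> R.
Hypothesis hm : fin_add_measure A m.

Lemma m_ge0 B : A B -> 0 <= m B. Proof. by case: hm => _ h _; apply: h. Qed.
Lemma m_add B C : A B -> A C -> B `&` C = set0 -> m (B `|` C) = m B + m C.
Proof. by case: hm => _ _ h; apply: h. Qed.
Lemma m_le B C : A B -> A C -> B `<=` C -> m B <= m C.
Proof.
move=> hB hC hBC; rewrite -(setDUK hBC) m_add ?setDIK //; last exact: algD.
by rewrite lerDl; apply: m_ge0; apply: algD.
Qed.
Lemma m_subadd B C : A B -> A C -> m (B `|` C) <= m B + m C.
Proof.
move=> hB hC; have -> : B `|` C = B `|` (C `\` B).
  by rewrite setUDr setDv setD0.
rewrite m_add ?setDIK //; last exact: algD.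
by rewrite lerD2l; apply: m_le => //; apply: algD.
Qed.
Lemma m_null S1 S2 N : A S1 -> A S2 -> A N -> S2 `<=` S1 -> S1 `\` S2 `<=` N ->
  m N = 0 -> m S1 = m S2.
Proof.
move=> h1 h2 hN h21 hd hN0; rewrite -(setDUK h21) m_add ?setDIK //; last exact: algD.
have : m (S1 `\` S2) <= 0 by rewrite -hN0; apply: m_le => //; exact: algD.
have := m_ge0 (algD h1 h2); lra.
Qed.
End Gen.

Section Prod.
Variable (T : Type) (A : set (set T)).
Lemma prod_alg_is_alg : is_algebra (prod_alg A).
Proof.
split.
- by move=> C hC _; case: hC.
- by move=> C hC _; case: hC.
- move=> B C hB hC D hD hr; case: (hD) => _ _ hU _; apply: hU; [exact: hB|exact: hC].
- move=> B hB D hD hr; case: (hD) => _ _ _ hc; apply: hc; exact: hB.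
Qed.
Lemma prod_alg_rect B1 B2 : A B1 -> A B2 -> prod_alg A (B1 `*` B2).
Proof. by move=> h1 h2 C _ hr; apply: hr. Qed.
End Prod.

Section Inj.
Variables (T U : Type) (f : T -> U).
Hypothesis hf : injective f.
Lemma inj_imageC B : f @` (~` B) = f @` setT `\` f @` B.
Proof.
apply/seteqP; split.
- move=> _ [x nB <-]; split; first by exists x.
  by move=> [y By /hf e]; apply: nB; rewrite -e.
- move=> _ [[x _ <-] nB]; exists x => // Bx; apply: nB; by exists x.
Qed.
Lemma inj_imageI B C : f @` (B `&` C) = f @` B `&` f @` C.
Proof.
apply/seteqP; split.
- by move=> _ [x [Bx Cx] <-]; split; exists x.
- move=> _ [[x Bx <-] [y Cy /hf e]]; exists x => //; split => //; by rewrite -e.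
Qed.
End Inj.

Lemma sval_inj (T : Type) (P : T -> Prop) : injective (@sval T P).
Proof.
move=> [x px] [y py] /= e; subst y; congr exist; exact: Prop_irrelevance.
Qed.

Lemma pair_sval_inj (T : Type) (P : T -> Prop) :
  injective (fun p : {x | P x} * {x | P x} => (sval p.1, sval p.2)).
Proof.
move=> [a b] [c d] /= [/sval_inj -> /sval_inj ->] //.
Qed.

Section Main.
Variables (R : realType) (X : Type) (D : datum R X).
Hypothesis hpre : pre_structural D.

Local Notation A := (dA D).
Local Notation mu := (dmu D).
Local Notation mu2 := (dmu2 D).
Local Notation RR := (dR D).
Local Notation G := (dG D).
Local Notation Pi := (dPi D).

Let hA : is_algebra A. Proof. by case: hpre => [[]]. Qed.
Let hA2 : is_algebra (prod_alg A). Proof. exact: prod_alg_is_alg. Qed.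
Let hmu : fin_add_measure A mu. Proof. by case: hpre => [[]]. Qed.
Let hmu2 : fin_add_measure (prod_alg A) mu2. Proof. by case: hpre => [[]]. Qed.
Let hrect B1 B2 : A B1 -> A B2 -> mu2 (B1 `*` B2) = mu B1 * mu B2.
Proof. by case: hpre => _ h _ _; apply: h. Qed.
Let hRA : A RR. Proof. by case: hpre => _ _ []. Qed.
Let hIA : A (dI D). Proof. by case: hpre => _ _ []. Qed.
Let hRI : RR `&` dI D = set0. Proof. by case: hpre => _ _ []. Qed.
Let hPiR x : RR (Pi x). Proof. by case: hpre => _ _ [] _ _ _ h _; exact: h. Qed.
Let hGA : prod_alg A G. Proof. by case: hpre => _ _ _ []. Qed.

Section WithI.
Hypotheses (hI : axiomI D) (hIIIb : axiomIIIb D).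

Let hPifix r : RR r -> Pi r = r. Proof. by case: hI => _ h _; apply: h. Qed.
Let hPiA B : A B -> B `<=` RR -> A (Pi @^-1` B). Proof. by case: hI => _ _ h; apply: h. Qed.

Lemma muCR : mu (~` RR) = 0.
Proof.
have e : Pi @^-1` RR = setT by apply/seteqP; split=> x //= _; exact: hPiR.
have h := @hIIIb RR hRA (@subset_refl _ RR); rewrite e in h.
move: h; rewrite -(setUv RR) (m_add hmu) ?setICr //; last exact: algC.
lra.
Qed.

Lemma mu2N : mu2 ((~` RR `*` setT) `|` (setT `*` ~` RR)) = 0.
Proof.
have hC := algC hA hRA; have hT := algT hA.
apply/eqP; rewrite eq_le; apply/andP; split; last first.
  apply: (m_ge0 hmu2); apply: (algU hA2); exact: prod_alg_rect.
apply: le_trans (m_subadd hA2 hmu2 (prod_alg_rect hC hT) (prod_alg_rect hT hC)) _.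
by rewrite !hrect // muCR mul0r mulr0 addr0.
Qed.

Lemma mu_R B : A B -> mu B = mu (B `&` RR).
Proof.
move=> hB; apply: (m_null hA hmu hB (algI hA hB hRA) (algC hA hRA) _ _ muCR).
  by move=> x [].
by move=> x [hx h] hr; apply: h.
Qed.

Lemma part_i B : A B ->
  mu2 ((B `*` setT) `&` G) = mu2 (((B `&` RR) `*` RR) `&` (G `&` (RR `*` RR))).
Proof.
move=> hB; have hC := algC hA hRA; have hT := algT hA.
apply: (m_null hA2 hmu2 _ _ _ _ _ mu2N).
- by apply: (algI hA2) => //; exact: prod_alg_rect.
- apply: (algI hA2) => //; first by apply: prod_alg_rect => //; exact: (algI hA).
  by apply: (algI hA2) => //; exact: prod_alg_rect.
- by apply: (algU hA2) => //; exact: prod_alg_rect.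
- by move=> [x y] [[[Bx Rx] Ry] [Gxy _]].
- move=> [x y] [[[Bx _] Gxy] nS].
  have [Rx|nRx] := pselect (RR x); last by left.
  have [Ry|nRy] := pselect (RR y); last by right.
  by exfalso; apply: nS.
Qed.


Lemma pre_eq B : (Pi @^-1` B) `&` RR = B `&` RR.
Proof.
apply/seteqP; split => x [h r]; split => //.
- by rewrite -(hPifix r).
- by rewrite /preimage /= (hPifix r).
Qed.

Lemma pre_R B : Pi @^-1` B = Pi @^-1` (B `&` RR).
Proof. by apply/seteqP; split => x //= [h _]. Qed.

Lemma hPiA' B : A B -> A (Pi @^-1` B).
Proof. by move=> hB; rewrite pre_R; apply: hPiA; [exact: (algI hA)|move=> x []]. Qed.

Lemma part_ii1 : axiomIIIc D <->
  (forall B, A B -> B `<=` RR ->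
     mu2 ((B `*` RR) `&` (G `&` (RR `*` RR))) =
     mu B + deta D * mu2 ((B `*` RR) `&` (G `&` (RR `*` RR)))).
Proof.
split.
- move=> h B hB hBR; have := h B hB.
  by rewrite part_i // (part_i (hPiA' hB)) pre_eq (setIidl hBR).
- move=> h B hB.
  rewrite part_i // (part_i (hPiA' hB)) pre_eq (mu_R hB).
  by apply: h; [exact: (algI hA)|move=> x []].
Qed.

End WithI.


Local Notation S := {x : X | RR x}.
Local Notation ps := (fun p : S * S => (sval p.1, sval p.2)).
Local Notation M C := (mu2 ((C `*` RR) `&` (G `&` (RR `*` RR)))).

Lemma img_rect (B1 B2 : set S) : ps @` (B1 `*` B2) = (sval @` B1) `*` (sval @` B2).
Proof.
apply/seteqP; split.
- by move=> _ [[x y] [Bx By] <-]; split; [exists x| exists y].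
- by move=> [a b] [/= [x Bx ex] [y By ey]]; exists (x, y) => //=; rewrite ex ey.
Qed.

Lemma img_setT : sval @` (setT : set S) = RR.
Proof.
apply/seteqP; split.
- by move=> _ [x _ <-]; exact: (proj2_sig x).
- by move=> x Rx; exists (exist _ x Rx).
Qed.

Lemma psT : ps @` (setT : set (S * S)) = RR `*` RR.
Proof.
have -> : (setT : set (S * S)) = setT `*` setT by apply/seteqP; split.
by rewrite img_rect img_setT.
Qed.

Lemma img_pre (B : set X) : sval @` (sval @^-1` B : set S) = B `&` RR.
Proof.
apply/seteqP; split.
- by move=> _ [x Bx <-]; split => //; exact: (proj2_sig x).
- by move=> x [Bx Rx]; exists (exist _ x Rx).
Qed.

Lemma img_eq (B' : set S) :
  ps @` ((B' `*` setT) `&` (fun p => G (sval p.1, sval p.2))) =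
  ((sval @` B') `*` RR) `&` (G `&` (RR `*` RR)).
Proof.
apply/seteqP; split.
- move=> _ [[x y] [[Bx _] Gxy] <-]; split; first by split; [exists x|exact: (proj2_sig y)].
  by split => //; split; [exact: (proj2_sig x)|exact: (proj2_sig y)].
- move=> [a b] [[[x Bx ex] Rb] [Gab _]]; exists (x, exist _ b Rb) => /=.
    by split => //=; rewrite ex.
  by rewrite ex.
Qed.

Lemma mu2_restr (B' : set S) :
  dmu2 (restrict_datum D) ((B' `*` setT) `&` dG (restrict_datum D)) = M (sval @` B').
Proof. by rewrite /= img_eq. Qed.

Lemma part_ii2 :
  axiomIIIc (restrict_datum D) <->
  (forall B, A B -> B `<=` RR -> M B = mu B + deta D * M B).
Proof.
split.
- move=> h B hB hBR.
  have eB : sval @` (sval @^-1` B : set S) = B.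
    by rewrite img_pre; apply/setIidl.
  have := h (sval @^-1` B : set S) (ltac:(by rewrite /= eB)).
  have e2 := mu2_restr (sval @^-1` B : set S).
  move: e2; rewrite eB => e2.
  change (dmu2 (restrict_datum D) ((sval @^-1` B `*` setT) `&` dG (restrict_datum D)) =
     mu (sval @` (sval @^-1` B : set S)) + deta D *
     dmu2 (restrict_datum D) ((sval @^-1` B `*` setT) `&` dG (restrict_datum D)) ->
     M B = mu B + deta D * M B).
  by rewrite e2 eB.
- move=> h B' hB'.
  transitivity (M (sval @` B')); first exact: mu2_restr.
  rewrite (h _ hB'); last by move=> _ [x _ <-]; exact: (proj2_sig x).
  congr (_ + _ * _); symmetry; exact: mu2_restr.
Qed.

Lemma restr_alg : is_algebra (dA (restrict_datum D)).
Proof.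
split => /=.
- by rewrite image_set0; exact: (alg0 hA).
- by rewrite img_setT.
- by move=> B C hB hC; rewrite image_setU; exact: (algU hA).
- move=> B hB; rewrite inj_imageC ?img_setT; last exact: sval_inj.
  exact: (algD hA).
Qed.

Lemma restr_mu : fin_add_measure (dA (restrict_datum D)) (dmu (restrict_datum D)).
Proof.
split => /=.
- by rewrite image_set0; case: hmu.
- by move=> B hB; exact: (m_ge0 hmu hB).
- move=> B C hB hC hBC; rewrite image_setU (m_add hmu) // -inj_imageI ?hBC ?image_set0 //.
  exact: sval_inj.
Qed.

Lemma L1 S' : prod_alg (dA (restrict_datum D)) S' -> prod_alg A (ps @` S').
Proof.
move=> h; apply: (h (fun S' => prod_alg A (ps @` S'))).
- split.
  + by rewrite image_set0; exact: (alg0 hA2).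
  + by rewrite psT; exact: prod_alg_rect.
  + by move=> B C hB hC; rewrite image_setU; exact: (algU hA2).
  + move=> B hB; rewrite inj_imageC; last exact: pair_sval_inj.
    by rewrite psT; apply: (algD hA2) => //; exact: prod_alg_rect.
- by move=> B1 B2 h1 h2; rewrite img_rect; exact: prod_alg_rect.
Qed.

Lemma restr_mu2 : fin_add_measure (prod_alg (dA (restrict_datum D))) (dmu2 (restrict_datum D)).
Proof.
split => /=.
- by rewrite image_set0; case: hmu2.
- by move=> B hB; exact: (m_ge0 hmu2 (L1 hB)).
- move=> B C hB hC hBC; rewrite image_setU (m_add hmu2 (L1 hB) (L1 hC)) //.
  rewrite -inj_imageI ?hBC ?image_set0 //; exact: pair_sval_inj.
Qed.

Lemma L2 S0 : prod_alg A S0 -> prod_alg (dA (restrict_datum D)) (ps @^-1` S0).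
Proof.
have hA' := prod_alg_is_alg (dA (restrict_datum D)).
move=> h; apply: (h (fun S0 => prod_alg (dA (restrict_datum D)) (ps @^-1` S0))).
- split.
  + by rewrite preimage_set0; exact: (alg0 hA').
  + by rewrite preimage_setT; exact: (algT hA').
  + by move=> B C hB hC; rewrite preimage_setU; exact: (algU hA').
  + by move=> B hB; rewrite -preimage_setC; exact: (algC hA').
- move=> B1 B2 h1 h2.
  have -> : ps @^-1` (B1 `*` B2) = (sval @^-1` B1 : set S) `*` (sval @^-1` B2 : set S).
    by apply/seteqP; split.
  by apply: prod_alg_rect => /=; rewrite img_pre; exact: (algI hA).
Qed.

Section WithI2.
Hypotheses (hI : axiomI D) (hIIIb : axiomIIIb D) (hIIIa : axiomIIIa D) (hII : axiomII D).

Lemma muR_pos : 0 < mu RR.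
Proof.
have h0 : mu (dI D) <= mu (~` RR).
  apply: (m_le hA hmu hIA (algC hA hRA)) => x Ix Rx.
  have : (RR `&` dI D) x by [].
  by rewrite hRI.
have h1 := m_ge0 hmu hIA.
have := muCR hIIIb; case: hIIIa; lra.
Qed.

Lemma restr_pre : pre_structural (restrict_datum D).
Proof.
split.
- split.
  + have [[x Rx]|nR] := pselect (exists x, RR x); first by exists (exist _ x Rx).
    have e : RR = set0 by apply/seteqP; split => // x Rx; apply: nR; exists x.
    have := muR_pos; rewrite e; case: hmu => -> _ _; by rewrite ltxx.
  + exact: restr_alg.
  + exact: restr_mu.
  + exact: restr_mu2.
- by move=> B1 B2 h1 h2 /=; rewrite img_rect; exact: hrect.
- split => //=.
  + by rewrite img_setT.
  + by rewrite image_set0; exact: (alg0 hA).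
  + by rewrite setI0.
- split => /=.
  + exact: (L2 hGA).
  + exact: muR_pos.
  + by case: hpre => _ _ _ [].
Qed.

Lemma restr_I : axiomI (restrict_datum D).
Proof. by split. Qed.

Lemma restr_II : axiomII (restrict_datum D).
Proof.
case: hII => hr hs hc; split => /=.
- by move=> x; exact: hr.
- by move=> x y; exact: hs.
- apply/seteqP; split.
  + by move=> [a b] [y [h1 h2]] /=; rewrite -hc; exists (sval y).
  + by move=> [a b] h; exists a; split => //=; exact: hr.
Qed.

Lemma restr_IIIa : axiomIIIa (restrict_datum D).
Proof.
split => /=; last exact: muR_pos.
by rewrite img_setT image_set0; case: hmu => -> _ _; rewrite addr0.
Qed.

Lemma restr_IIIb : axiomIIIb (restrict_datum D).
Proof. by move=> B _ _. Qed.

End WithI2.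
End Main.

Theorem theorem8p18 (R : realType) (X : Type) (D : datum R X) :
  pre_structural D ->
  deta D < 1 ->
  (forall r, dR D r -> dA D [set r] /\ dA D (dPi D @^-1` [set r])) ->
  (finite_set (dR D) \/
   [/\ countable (dR D), sigma_alg_closed (dA D) & sigma_additive (dA D) (dmu D)]) ->
  (* (i) *)
  (axiomI D -> axiomIIIb D ->
     dmu D (setT `\` dR D) = 0 /\
     (forall B, dA D B ->
        dmu2 D ((B `*` setT) `&` dG D) =
        dmu2 D (((B `&` dR D) `*` dR D) `&` (dG D `&` (dR D `*` dR D))))) /\
  (* (ii) *)
  (axiomI D -> axiomIIIb D ->
     (axiomIIIc D <-> axiomIIIc (restrict_datum D)) /\
     (axiomIIIc D <->
        (forall B, dA D B -> B `<=` dR D ->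
           dmu2 D ((B `*` dR D) `&` (dG D `&` (dR D `*` dR D))) =
           dmu D B + deta D * dmu2 D ((B `*` dR D) `&` (dG D `&` (dR D `*` dR D)))))) /\
  (* (iii) *)
  (axiomI D -> axiomII D -> axiomIIIa D -> axiomIIIb D ->
     dR D `|` dI D = setT ->
     (admissible D <-> admissible (restrict_datum D))).
Proof.
move=> hpre _ _ _.
have hii : axiomI D -> axiomIIIb D -> (axiomIIIc D <-> axiomIIIc (restrict_datum D)).
  move=> hI hb; apply: iff_trans (part_ii1 hpre hI hb) _.
  exact: iff_sym (part_ii2 D).
split; [|split].
- move=> hI hb; split; first by rewrite setTD; exact: (muCR hpre hb).
  by move=> B hB; exact: (part_i hpre hb hB).
- move=> hI hb; split; first exact: hii.
  exact: (part_ii1 hpre hI hb).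
- move=> hI hII hIIIa hb _; split.
  + case=> _ _ _ [_ _ hc]; split.
    * exact: (restr_pre hpre hb hIIIa).
    * exact: restr_I.
    * exact: (restr_II hII).
    * split; [exact: (restr_IIIa hpre hb hIIIa)|exact: restr_IIIb|exact/(hii hI hb)].
  + case=> _ _ _ [_ _ hc]; split => //; split => //; exact/(hii hI hb).
Qed.
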